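(* Let $\pi$ be a permutation of an ordinary set $[k]$ (all letters distinct). Then there exists a constant $e_\pi$ such that for all integers $n\geq1$ and $l\geq n$: (i) for every $\mu:[n]\to\mathbb N\setminus\{0\}$ with $\sum_{i=1}^n\mu(i)=l$, the number $s_\mu(\pi)$ of permutations of the multiset $\{1^{\mu(1)},\ldots,n^{\mu(n)}\}$ avoiding $\pi$ satisfies $s_\mu(\pi)\leq e_\pi^{\,l}$; and (ii) the number $w_{l,n}(\pi)$ of words of length $l$ over the alphabet $[n]$ avoiding $\pi$ satisfies $w_{l,n}(\pi)\leq e_\pi^{\,l}$.
   Context: A permutation of the multiset $\{1^{\mu(1)},\ldots,n^{\mu(n)}\}$ is a sequence of length $\sum_i\mu(i)$ in which each $i\in[n]$ appears exactly $\mu(i)$ times. A word of length $l$ over $[n]$ is any sequence in $[n]^l$. A sequence $\sigma$ avoids $\pi=\pi_1\cdots\pi_k$ if there are no indices $i_1<\cdots<i_k$ with $\sigma_{i_a}<\sigma_{i_b}\iff\pi_a<\pi_b$ and $\sigma_{i_a}=\sigma_{i_b}\iff\pi_a=\pi_b$ for all $a,b$. *)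

(* Defs.v *)
From mathcomp Require Import all_boot.
Set Implicit Arguments. Unset Strict Implicit. Unset Printing Implicit Defensive.

Definition order_iso (s p : seq nat) : bool :=
  (size s == size p) &&
  [forall a : 'I_(size p), forall b : 'I_(size p),
    ((nth 0 s a < nth 0 s b) == (nth 0 p a < nth 0 p b)) &&
    ((nth 0 s a == nth 0 s b) == (nth 0 p a == nth 0 p b))].

Definition contains (sigma p : seq nat) : bool :=
  [exists m : (size sigma).-tuple bool, order_iso (mask m sigma) p].

Definition avoids (sigma p : seq nat) : bool := ~~ contains sigma p.

(* A word of length l over [n] is encoded as an l-tuple of 'I_n, letter
   i : 'I_n standing for i+1 (a shift that does not affect patterns). *)
Definition word_seq n l (w : l.-tuple 'I_n) : seq nat := [seq (val i).+1 | i <- w].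

Definition w_count (l n : nat) (p : seq nat) : nat :=
  #|[set w : l.-tuple 'I_n | avoids (word_seq w) p ]|.

Definition s_count (n l : nat) (mu : 'I_n -> nat) (p : seq nat) : nat :=
  #|[set w : l.-tuple 'I_n |
       [forall i : 'I_n, count_mem i w == mu i] && avoids (word_seq w) p ]|.
Arguments s_count : clear implicits.
Arguments w_count : clear implicits.

(* Main.v *)
Require Import Defs.
From mathcomp Require Import all_boot.
From mathcomp Require Import all_boot all_fingroup zify.
From Stdlib Require Import ClassicalEpsilon.
Set Implicit Arguments. Unset Strict Implicit. Unset Printing Implicit Defensive.

Definition tb (P : Prop) : bool := if excluded_middle_informative P then true else false.
Lemma tbP P : reflect P (tb P).
Proof. rewrite /tb; case: excluded_middle_informative => h; constructor => //. Qed.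

Lemma sorted_enum_set M (A : {set 'I_M}) : sorted (relpre val ltn) (enum A).
Proof.
rewrite -deprecated_filter_index_enum.
apply: sorted_filter; first by move=> x y z /=; apply: ltn_trans.
rewrite -sorted_map. rewrite /index_enum. rewrite -enumT val_enum_ord iota_ltn_sorted //.
Qed.
Lemma inc_enum k M (A : {set 'I_M}) : k <= #|A| ->
  exists R : 'I_k -> 'I_M, (forall i j : 'I_k, i < j -> val (R i) < val (R j)) /\ forall i, R i \in A.
Proof.
move=> hk; exists (fun i => enum_val (widen_ord hk i)); split; last by move=> i; apply: enum_valP.
move=> i j lij.
rewrite (enum_val_nth (enum_val (widen_ord hk i))) (enum_val_nth (enum_val (widen_ord hk i)) (widen_ord _ j)).
have tr : transitive (relpre (val : 'I_M -> nat) ltn) by move=> x y z /=; apply: ltn_trans.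
have := sorted_ltn_nth tr (enum_val (widen_ord hk i)) (@sorted_enum_set _ A).
apply => //=.
- by rewrite inE -cardE (leq_trans (ltn_ord i)).
- by rewrite inE -cardE (leq_trans (ltn_ord j)).
Qed.

Lemma ex_subset (T : finType) (A : {set T}) k : k <= #|A| -> exists K : {set T}, (K \subset A) && (#|K| == k).
Proof.
elim: k => [|k IH] hk; first by exists set0; rewrite sub0set cards0.
have [K /andP[KA /eqP cK]] := IH (ltnW hk).
have : K \proper A by rewrite properEcard KA cK.
move=> /properP[_ [x xA xK]].
exists (x |: K); rewrite subUset sub1set xA KA /= cardsU1 xK cK //.
Qed.

Lemma pigeon (T U : finType) (W : {set T}) (h : T -> {set U}) k :
  (forall B, B \in W -> k <= #|h B|) ->
  (forall K : {set U}, #|K| = k -> #|[set B in W | K \subset h B]| < k) ->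
  #|W| <= (k-1) * 'C(#|U|, k).
Proof.
move=> hW hK.
pose g B := odflt set0 [pick K : {set U} | (K \subset h B) && (#|K| == k)].
have gP B : B \in W -> (g B \subset h B) && (#|g B| == k).
  move=> BW; rewrite /g; case: pickP => [K //|] /= H.
  by have [K /andP[a b]] := ex_subset (hW B BW); have := H K; rewrite a b.
rewrite -sum1_card (partition_big_imset g) /=.
apply: leq_trans (_ : \sum_(K in [set g x | x in W]) (k-1) <= _).
  apply: leq_sum => K /imsetP[B0 B0W ->].
  have [/eqP c0] : #|g B0| == k by case/andP: (gP B0 B0W).
  have := hK _ c0; set K0 := g B0 => hlt.
  rewrite sum1dep_card -ltnS; apply: leq_trans (_ : k <= _); last by clear; lia.
  apply: leq_ltn_trans hlt; apply: subset_leq_card; apply/subsetP => B; rewrite !inE.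
  by case/andP=> BW /eqP <-; rewrite BW; case/andP: (gP B BW).
rewrite sum_nat_const mulnC leq_mul2l; apply/orP; right.
rewrite -card_draws; apply: subset_leq_card; apply/subsetP => K /imsetP[B BW ->].
by rewrite inE; case/andP: (gP B BW).
Qed.

Section Pat.
Variable k : nat.
Variable sg : {perm 'I_k}.

Definition cont N (S : {set 'I_N * 'I_N}) : Prop :=
  exists r c : 'I_k -> nat,
    (forall i j : 'I_k, i < j -> r i < r j) /\
    (forall i j : 'I_k, i < j -> c i < c j) /\
    (forall j : 'I_k, exists2 p, p \in S & (val p.1 == r (sg j)) && (val p.2 == c j)).

Lemma cont_lift N (S : {set 'I_N * 'I_N}) (rho gam : nat -> nat) (R C : 'I_k -> nat) :
  (forall x y, rho x < rho y -> x < y) -> (forall x y, gam x < gam y -> x < y) ->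
  (forall i j : 'I_k, i < j -> R i < R j) -> (forall i j : 'I_k, i < j -> C i < C j) ->
  (forall j : 'I_k, exists2 p, p \in S & (rho (val p.1) == R (sg j)) && (gam (val p.2) == C j)) ->
  cont S.
Proof.
move=> hr hg hR hC H.
have H' : forall j : 'I_k, exists p, [&& p \in S, rho (val p.1) == R (sg j) & gam (val p.2) == C j].
  by move=> j; case: (H j) => p p1 p2; exists p; rewrite p1.
pose P j := xchoose (H' j).
have PP j : [&& P j \in S, rho (val (P j).1) == R (sg j) & gam (val (P j).2) == C j] := xchooseP (H' j).
exists (fun i => val (P ((sg^-1)%g i)).1), (fun j => val (P j).2); split; [|split].
- move=> i j lij; apply: hr.
  have /and3P[_ /eqP -> _] := PP ((sg^-1)%g i).
  have /and3P[_ /eqP -> _] := PP ((sg^-1)%g j).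
  by rewrite !permKV; apply: hR.
- move=> i j lij; apply: hg.
  have /and3P[_ _ /eqP ->] := PP i.
  have /and3P[_ _ /eqP ->] := PP j.
  by apply: hC.
- move=> j; exists (P j); first by case/and3P: (PP j).
  by rewrite permK !eqxx.
Qed.

Section Contract.
Variables b m : nat.
Hypothesis hb : 0 < b.
Lemma cdiv_lt (x : 'I_(b*m)) : x %/ b < m.
Proof. by rewrite ltn_divLR // [m * b]mulnC. Qed.
Definition cdiv (x : 'I_(b*m)) : 'I_m := Ordinal (cdiv_lt x).
Definition cmod (x : 'I_(b*m)) : 'I_b := Ordinal (ltn_pmod x hb).
Definition cmap (p : 'I_(b*m) * 'I_(b*m)) := (cdiv p.1, cdiv p.2).
Definition cS (S : {set 'I_(b*m) * 'I_(b*m)}) := cmap @: S.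

Lemma cdivmod_inj x y : cdiv x = cdiv y -> cmod x = cmod y -> x = y.
Proof.
move=> /(congr1 val) /= h1 /(congr1 val) /= h2; apply: val_inj.
by rewrite /= (divn_eq x b) (divn_eq y b) h1 h2.
Qed.

Lemma cmap_inj p q : cmap p = cmap q -> cmod p.1 = cmod q.1 -> cmod p.2 = cmod q.2 -> p = q.
Proof.
case: p q => [p1 p2] [q1 q2] /= e h1 h2.
have e1 : cdiv p1 = cdiv q1 by move: e => /(congr1 fst).
have e2 : cdiv p2 = cdiv q2 by move: e => /(congr1 snd).
by rewrite (cdivmod_inj e1 h1) (cdivmod_inj e2 h2).
Qed.

Lemma cell_card B : #|[set p | cmap p == B]| <= b*b.
Proof.
rewrite -(@card_in_imset _ _ (fun p => (cmod p.1, cmod p.2))).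
  by apply: leq_trans (max_card _) _; rewrite card_prod card_ord.
move=> [p1 p2] [q1 q2]; rewrite !inE => /eqP hp /eqP hq [h1 h2].
rewrite -hq in hp; case: hp => e1 e2.
have E (x y : nat) : x %/ b = y %/ b -> x = y %[mod b] -> x = y.
  by move=> u v; rewrite (divn_eq x b) (divn_eq y b) u v.
by congr pair; apply: val_inj; apply: E.
Qed.

Lemma pre_card (S' : {set 'I_m * 'I_m}) : #|cmap @^-1: S'| <= b*b*#|S'|.
Proof.
rewrite -sum1_card (partition_big_imset cmap) /=.
apply: leq_trans (_ : \sum_(B in [set cmap x | x in cmap @^-1: S']) (b*b) <= _).
  apply: leq_sum => B _; rewrite sum1dep_card; apply: leq_trans (cell_card B).
  by apply: subset_leq_card; apply/subsetP => p; rewrite !inE => /andP[_ ->].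
rewrite sum_nat_const mulnC leq_mul2l; apply/orP; right.
apply: subset_leq_card; apply/subsetP => B /imsetP[p]; rewrite inE => h ->; done.
Qed.

Lemma cS_cont S : cont (cS S) -> cont S.
Proof.
case=> r [c [hr [hc hp]]].
have refl : forall x y, x %/ b < y %/ b -> x < y.
  by move=> x y; apply: contraTT; rewrite -!leqNgt; apply: leq_div2r.
apply: (@cont_lift _ S (fun x => x %/ b) (fun x => x %/ b) r c refl refl hr hc).
move=> j; case: (hp j) => p' /imsetP[p pS ->] /andP[e1 e2].
by exists p => //; rewrite e1 e2.
Qed.


Definition blk (S : {set 'I_(b*m) * 'I_(b*m)}) B := [set p in S | cmap p == B].
Definition colset (S : {set 'I_(b*m) * 'I_(b*m)}) B : {set 'I_b} := [set cmod p.2 | p in blk S B].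
Definition rowset (S : {set 'I_(b*m) * 'I_(b*m)}) B : {set 'I_b} := [set cmod p.1 | p in blk S B].

Lemma card_S (S : {set 'I_(b*m) * 'I_(b*m)}) : #|S| = \sum_(B in cS S) #|blk S B|.
Proof.
rewrite -sum1_card (partition_big_imset cmap); apply: eq_bigr => B _.
by rewrite sum1dep_card.
Qed.

Lemma blk_small (S : {set 'I_(b*m) * 'I_(b*m)}) B : #|blk S B| <= #|rowset S B| * #|colset S B|.
Proof.
rewrite -cardsX -(@card_in_imset _ _ (fun p => (cmod p.1, cmod p.2))).
  apply: subset_leq_card; apply/subsetP => x /imsetP[p pB ->].
  by rewrite inE /=; apply/andP; split; apply/imsetP; exists p.
move=> p q; rewrite !inE => /andP[_ /eqP hp] /andP[_ /eqP hq] [h1 h2].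
apply: cmap_inj; first by rewrite hp hq.
- by apply: val_inj; exact: h1.
- by apply: val_inj; exact: h2.
Qed.

Lemma blk_cell (S : {set 'I_(b*m) * 'I_(b*m)}) B : #|blk S B| <= b*b.
Proof.
apply: leq_trans (cell_card B); apply: subset_leq_card; apply/subsetP => p.
by rewrite !inE => /andP[_ ->].
Qed.

Lemma divb_refl x y : x %/ b < y %/ b -> x < y.
Proof. by apply: contraTT; rewrite -!leqNgt; apply: leq_div2r. Qed.

Lemma wide_col (S : {set 'I_(b*m) * 'I_(b*m)}) (Y : 'I_m) : ~ cont S ->
  #|[set B in cS S | (B.2 == Y) && (k <= #|colset S B|)]| <= (k-1)*'C(b,k).
Proof.
move=> nc; set W := [set B in cS S | _].
have := @pigeon _ _ W (colset S) k; rewrite card_ord; apply.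
  by move=> B; rewrite inE => /andP[_ /andP[_ ->]].
move=> K cK; rewrite ltnNge; apply/negP => hF; apply: nc.
set F := [set B in W | K \subset colset S B] in hF.
have hF' : k <= #|[set B.1 | B in F]|.
  rewrite card_in_imset // => [[x1 x2] [y1 y2]]; rewrite !inE /=.
  by move=> /andP[/andP[_ /andP[/eqP -> _]] _] /andP[/andP[_ /andP[/eqP -> _]] _] ->.
have [R [hR RX]] := inc_enum hF'.
have [C' [hC CK]] := @inc_enum k _ K (eq_leq (esym cK)).
apply: (@cont_lift _ S (fun x => x %/ b) id (fun i => val (R i)) (fun j => Y * b + C' j) divb_refl) => //.
  by move=> i j lij; rewrite ltn_add2l; apply: hC.
move=> j; have /imsetP[B BF eB] := RX (sg j).
move: BF; rewrite !inE => /andP[/andP[BS /andP[/eqP BY _]] KB].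
have /imsetP[p pB ep] := subsetP KB _ (CK j).
exists p; first by move: pB; rewrite inE => /andP[].
move: pB; rewrite inE => /andP[_ /eqP cp].
have e1 : val (R (sg j)) = p.1 %/ b by rewrite eB -cp.
have eY : val Y = p.2 %/ b by rewrite -BY -cp.
have eC : val (C' j) = p.2 %% b by rewrite ep.
by rewrite e1 eY eC -divn_eq !eqxx.
Qed.

Lemma tall_row (S : {set 'I_(b*m) * 'I_(b*m)}) (X : 'I_m) : ~ cont S ->
  #|[set B in cS S | (B.1 == X) && (k <= #|rowset S B|)]| <= (k-1)*'C(b,k).
Proof.
move=> nc; set W := [set B in cS S | _].
have := @pigeon _ _ W (rowset S) k; rewrite card_ord; apply.
  by move=> B; rewrite inE => /andP[_ /andP[_ ->]].
move=> K cK; rewrite ltnNge; apply/negP => hF; apply: nc.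
set F := [set B in W | K \subset rowset S B] in hF.
have hF' : k <= #|[set B.2 | B in F]|.
  rewrite card_in_imset // => [[x1 x2] [y1 y2]]; rewrite !inE /=.
  by move=> /andP[/andP[_ /andP[/eqP -> _]] _] /andP[/andP[_ /andP[/eqP -> _]] _] ->.
have [C [hC CX]] := inc_enum hF'.
have [R' [hR RK]] := @inc_enum k _ K (eq_leq (esym cK)).
apply: (@cont_lift _ S id (fun x => x %/ b) (fun i => X * b + R' i) (fun j => val (C j)) _ divb_refl) => //.
  by move=> i j lij; rewrite ltn_add2l; apply: hR.
move=> j; have /imsetP[B BF eB] := CX j.
move: BF; rewrite !inE => /andP[/andP[BS /andP[/eqP BX _]] KB].
have /imsetP[p pB ep] := subsetP KB _ (RK (sg j)).
exists p; first by move: pB; rewrite inE => /andP[].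
move: pB; rewrite inE => /andP[_ /eqP cp].
have e1 : val (C j) = p.2 %/ b by rewrite eB -cp.
have eX : val X = p.1 %/ b by rewrite -BX -cp.
have eC : val (R' (sg j)) = p.1 %% b by rewrite ep.
by rewrite e1 eX eC -divn_eq !eqxx.
Qed.


Lemma wide_tot (S : {set 'I_(b*m) * 'I_(b*m)}) : ~ cont S ->
  #|[set B in cS S | k <= #|colset S B|]| <= m * ((k-1)*'C(b,k)).
Proof.
move=> nc; rewrite -sum1_card (partition_big_imset snd) /=.
apply: leq_trans (_ : \sum_(Y in [set x.2 | x in [set B in cS S | k <= #|colset S B|]]) ((k-1)*'C(b,k)) <= _).
  apply: leq_sum => Y _; rewrite sum1dep_card; apply: leq_trans (wide_col Y nc).
  by apply: subset_leq_card; apply/subsetP => B; rewrite !inE => /andP[/andP[-> ->] ->].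
rewrite sum_nat_const leq_mul2r; apply/orP; right.
by apply: leq_trans (max_card _) _; rewrite card_ord.
Qed.

Lemma tall_tot (S : {set 'I_(b*m) * 'I_(b*m)}) : ~ cont S ->
  #|[set B in cS S | k <= #|rowset S B|]| <= m * ((k-1)*'C(b,k)).
Proof.
move=> nc; rewrite -sum1_card (partition_big_imset fst) /=.
apply: leq_trans (_ : \sum_(X in [set x.1 | x in [set B in cS S | k <= #|rowset S B|]]) ((k-1)*'C(b,k)) <= _).
  apply: leq_sum => X _; rewrite sum1dep_card; apply: leq_trans (tall_row X nc).
  by apply: subset_leq_card; apply/subsetP => B; rewrite !inE => /andP[/andP[-> ->] ->].
rewrite sum_nat_const leq_mul2r; apply/orP; right.
by apply: leq_trans (max_card _) _; rewrite card_ord.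
Qed.

Lemma MT_bound (S : {set 'I_(b*m) * 'I_(b*m)}) : ~ cont S ->
  #|S| <= b*b*(2*(m*((k-1)*'C(b,k)))) + (k-1)*(k-1)*#|cS S|.
Proof.
move=> nc; set a := fun B => (k <= #|colset S B|) || (k <= #|rowset S B|).
rewrite card_S (bigID a) /=; apply: leq_add.
  apply: leq_trans (_ : \sum_(B in cS S | a B) (b*b) <= _).
    by apply: leq_sum => B _; apply: blk_cell.
  rewrite (eq_bigl (mem ([set B in cS S | k <= #|colset S B|] :|: [set B in cS S | k <= #|rowset S B|]))); last first.
    by move=> B; rewrite !inE /a -andb_orr.
  rewrite sum_nat_const mulnC leq_mul2l; apply/orP; right.
  rewrite cardsU mul2n -addnn; apply: leq_trans (leq_subr _ _) _.
  by apply: leq_add; [apply: wide_tot | apply: tall_tot].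
apply: leq_trans (_ : \sum_(B in cS S | ~~ a B) ((k-1)*(k-1)) <= _).
  apply: leq_sum => B /andP[_]; rewrite negb_or -!ltnNge => /andP[hc hr].
  apply: leq_trans (blk_small S B) _; apply: leq_mul; rewrite -ltnS; apply: leq_trans (_ : k <= _) => //; lia.
apply: leq_trans (_ : \sum_(B in cS S) ((k-1)*(k-1)) <= _).
  by rewrite [X in _ <= X](bigID a) /= leq_addl.
by rewrite sum_nat_const mulnC.
Qed.

End Contract.

Definition AV N := [set S : {set 'I_N * 'I_N} | tb (~ cont S)].

Lemma klazar b m E : 0 < b -> (forall S, S \in AV m -> #|S| <= E) ->
  #|AV (b*m)| <= #|AV m| * 2^(b*b*E).
Proof.
move=> hb hE; rewrite -sum1_card (partition_big_imset (cS hb)) /=.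
apply: leq_trans (_ : \sum_(S' in [set cS hb x | x in AV (b*m)]) 2^(b*b*E) <= _).
  apply: leq_sum => S' /imsetP[S0 S0in ->]; rewrite sum1dep_card.
  have S0av : cS hb S0 \in AV m.
    rewrite inE; apply/tbP => hc; move: S0in; rewrite inE => /tbP; apply.
    exact: cS_cont hc.
  apply: leq_trans (_ : #|powerset (cmap hb @^-1: cS hb S0)| <= _).
    apply: subset_leq_card; apply/subsetP => S; rewrite !inE => /andP[_ /eqP e].
    apply/subsetP => x xS; rewrite inE -e; exact: imset_f.
  rewrite card_powerset leq_exp2l //; apply: leq_trans (pre_card _ _) _.
  by rewrite leq_mul2l hE ?orbT.
rewrite sum_nat_const leq_mul2r; apply/orP; right.
apply: subset_leq_card; apply/subsetP => S' /imsetP[S0 S0in ->].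
rewrite inE; apply/tbP => hc; move: S0in; rewrite inE => /tbP; apply.
exact: cS_cont hc.
Qed.

Definition bb := k*k+2.
Definition DD := 2 * (bb*bb) * ((k-1)*'C(bb,k)) + 1.

Lemma ex_bound j N : N = bb^j -> forall S : {set 'I_N * 'I_N}, ~ cont S -> #|S| <= DD * N.
Proof.
have hb : 0 < bb by rewrite /bb addn2.
elim: j N => [|j IH] N eN S nc.
  apply: leq_trans (max_card _) _; rewrite card_prod card_ord eN expn0 muln1.
  by rewrite /DD addn1.
rewrite expnS in eN; subst N.
apply: leq_trans (MT_bound hb nc) _.
have h1 : #|cS hb S| <= DD * bb^j.
  apply: (IH _ erefl) => hc; apply: nc; exact: cS_cont hc.
set X := (k-1)*'C(bb,k) in h1 *.
have hD : DD = 2 * (bb * bb) * X + 1 by [].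
have hk : (k-1)*(k-1) + 1 <= bb by rewrite /bb; nia.
set M := bb^j in h1 *. set C := #|cS hb S| in h1 *.
rewrite hD in h1 *. nia.
Qed.

Lemma av_count j N : N = bb^j -> #|AV N| <= 2^(bb*bb*DD*N).
Proof.
have hb : 0 < bb by rewrite /bb addn2.
elim: j N => [|j IH] N eN.
  apply: leq_trans (_ : #|powerset [set: 'I_N * 'I_N]| <= _).
    by apply: subset_leq_card; apply/subsetP => S _; rewrite inE subsetT.
  rewrite card_powerset cardsT card_prod card_ord eN expn0.
  rewrite leq_exp2l // muln1; rewrite /DD /bb.
by rewrite muln1 !muln_gt0 !addn2 addn1.
rewrite expnS in eN; subst N.
apply: leq_trans (klazar (E := DD * bb^j) hb _) _.
  move=> S; rewrite inE => /tbP; exact: ex_bound.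
apply: leq_trans (leq_mul (IH _ erefl) (leqnn _)) _.
rewrite -expnD leq_exp2l //.
have : 2 <= bb by rewrite /bb; lia.
set M := bb ^ j; set Q := bb*bb; rewrite /Q; nia.
Qed.

End Pat.

Lemma inc_lt k (r : 'I_k -> nat) : (forall i j : 'I_k, i < j -> r i < r j) ->
  forall i j, (r i < r j) = (i < j) /\ (r i == r j) = (i == j).
Proof.
move=> hr i j; have E : (i == j) = (val i == val j) by [].
rewrite E; case: (ltngtP i j) => h.
- by split; [rewrite hr | rewrite ltn_eqF ?hr].
- by split; [rewrite ltnNge ltnW ?hr | rewrite gtn_eqF ?hr].
- by move/val_inj: h => ->; rewrite !ltnn !eqxx.
Qed.

Section Words.
Variables (k : nat) (pi : seq nat) (sg : {perm 'I_k}).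
Hypothesis hsz : size pi = k.
Hypothesis hpi : forall j : 'I_k, nth 0 pi j = (sg j).+1.
Variables (n l N : nat) (hn : n <= N) (hl : l <= N).

Definition phi (w : l.-tuple 'I_n) : {set 'I_N * 'I_N} :=
  [set (widen_ord hn (tnth w i), widen_ord hl i) | i : 'I_l].

Lemma phi_inj : injective phi.
Proof.
move=> w w' e; apply: eq_from_tnth => i.
have : (widen_ord hn (tnth w i), widen_ord hl i) \in phi w' by rewrite -e; apply: imset_f.
case/imsetP => i' _ [e1 e2].
have ei : i = i' by apply: val_inj; exact: e2.
by subst i'; apply: val_inj; exact: e1.
Qed.

Lemma word_cont w : cont sg (phi w) -> contains (word_seq w) pi.
Proof.
case=> r [c [hr [hc hp]]].
have hpt j : exists i : 'I_l, (val i == c j) && (val (tnth w i) == r (sg j)).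
  case: (hp j) => p /imsetP[i _ ->] /= /andP[e1 e2]; exists i; by rewrite e1 e2.
pose cl := [seq c j | j <- enum 'I_k].
have hsw : size (word_seq w) = l by rewrite size_map size_tuple.
pose ms := [seq i \in cl | i <- iota 0 l].
have hms : size ms == size (word_seq w) by rewrite size_map size_iota hsw.
apply/existsP; exists (Tuple hms).
have mi : mask ms (iota 0 l) = cl.
  rewrite /ms -filter_mask; apply: (@irr_sorted_eq _ ltn).
  - exact: ltn_trans.
  - exact: ltnn.
  - by apply: sorted_filter; [exact: ltn_trans | exact: iota_ltn_sorted].
  - rewrite /cl; have tr : transitive (relpre c ltn) by move=> x y z /=; apply: ltn_trans.
    rewrite sorted_map; apply: (@sub_sorted _ (relpre val ltn)); first by move=> x y /= /hc.
    by rewrite -sorted_map val_enum_ord iota_ltn_sorted.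
  - move=> x; rewrite mem_filter mem_iota /= add0n andbC; case xc: (x \in cl); last by rewrite andbF.
    move: xc => /mapP[j _ ->]; case: (hpt j) => i /andP[/eqP <- _]; by rewrite ltn_ord.
have -> : mask (Tuple hms) (word_seq w) = [seq (r (sg j)).+1 | j <- enum 'I_k].
  rewrite /= -(mkseq_nth 0 (word_seq w)) hsw /mkseq -map_mask mi /cl -map_comp.
  apply: eq_map => j /=; case: (hpt j) => i /andP[/eqP <- /eqP <-].
  rewrite /word_seq (nth_map (tnth w i)) ?size_tuple ?ltn_ord //.
  by rewrite -tnth_nth.
have nV (x : 'I_k) : nth 0 [seq (r (sg j)).+1 | j <- enum 'I_k] x = (r (sg x)).+1.
  by rewrite (nth_map x) ?size_enum_ord ?ltn_ord // nth_ord_enum.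
rewrite /order_iso size_map size_enum_ord hsz eqxx /=.
apply/forallP => a; apply/forallP => b'.
rewrite !nV !hpi !ltnS !eqSS.
have [h1 h2] := inc_lt hr (sg a) (sg b').
by rewrite h1 h2 !eqxx.
Qed.

End Words.

Theorem corollary9 (k : nat) (pi : seq nat) (Hpi : perm_eq pi (iota 1 k)) :
  exists e : nat, forall n l : nat, 1 <= n -> n <= l ->
    (forall mu : 'I_n -> nat, (forall i, 0 < mu i) -> (\sum_(i < n) mu i) = l ->
       s_count n l mu pi <= e ^ l) /\
    w_count l n pi <= e ^ l.
Proof.
have hsz : size pi = k by rewrite (perm_size Hpi) size_iota.
have hu : uniq pi by rewrite (perm_uniq Hpi) iota_uniq.
have hin j : j < k -> 1 <= nth 0 pi j <= k.
  move=> hj; have : nth 0 pi j \in iota 1 k by rewrite -(perm_mem Hpi) mem_nth // hsz.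
  rewrite mem_iota; lia.
have hlt (j : 'I_k) : (nth 0 pi j).-1 < k by case/andP: (hin j (ltn_ord j)) => ? ?; lia.
pose f j := Ordinal (hlt j).
have finj : injective f.
  move=> x y /(congr1 val) /= e; apply: ord_inj; apply/eqP.
  rewrite -(nth_uniq 0 _ _ hu) ?hsz ?ltn_ord //; apply/eqP.
  change (nth 0 pi x = nth 0 pi y).
  by case/andP: (hin x (ltn_ord x)) => ? ?; case/andP: (hin y (ltn_ord y)) => ? ?; lia.
pose sg := perm finj.
have hpi (j : 'I_k) : nth 0 pi j = (sg j).+1 by rewrite permE /=; case/andP: (hin j (ltn_ord j)) => ? ?; lia.
exists (2 ^ (bb k * bb k * DD k * bb k)).
move=> n l hn1 hnl.
have hl1 : 0 < l by lia.
have hb2 : 2 <= bb k by rewrite /bb; lia.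
have exj : exists j, l <= bb k ^ j by exists l; apply: ltnW; apply: ltn_expl.
have [j hj jmin] := find_ex_minn exj.
have hjb : bb k ^ j <= bb k * l.
  case: j hj jmin => [|j] hj jmin; first by rewrite expn0; nia.
  have : ~~ (l <= bb k ^ j) by apply/negP => h; have := jmin _ h; rewrite ltnn.
  rewrite -ltnNge expnS => h; rewrite leq_mul2l; apply/orP; right; exact: ltnW.
set N := bb k ^ j in hj hjb.
have hnN : n <= N by lia.
have hw : w_count l n pi <= 2 ^ (bb k * bb k * DD k * N).
  apply: leq_trans (av_count sg (erefl N)).
  rewrite /w_count -(@card_in_imset _ _ (phi hnN hj)); last by move=> x y _ _; apply: phi_inj.
  apply: subset_leq_card; apply/subsetP => S /imsetP[w win ->]; rewrite inE; apply/tbP => hc.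
  by move: win; rewrite inE => /negP; apply; apply: (word_cont hsz hpi hc).
have hfin : 2 ^ (bb k * bb k * DD k * N) <= (2 ^ (bb k * bb k * DD k * bb k)) ^ l.
  rewrite -expnM leq_exp2l // -!mulnA leq_mul2l; apply/orP; right.
  rewrite leq_mul2l; apply/orP; right; rewrite leq_mul2l; apply/orP; right; exact: hjb.
split; last exact: leq_trans hw hfin.
move=> mu _ _; apply: leq_trans _ (leq_trans hw hfin); rewrite /s_count /w_count.
by apply: subset_leq_card; apply/subsetP => w; rewrite !inE => /andP[_ ->].
Qed.
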